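(* Let $q\geq 1$, and assume that the following convergence-of-means condition holds: with $$\mu_N=\frac1N\sum_{i=1}^N\lambda_i,\qquad \nu_N=\frac{\sum_{i=1}^N\lambda_i^2}{\sum_{i=1}^N\lambda_i},$$ there exist constants $\mu\in(0,\infty)$, $\nu\in(1,\infty)$ and $\alpha_1>0$ such that $|\mu_N-\mu|=O(N^{-\alpha_1})$ and $|\nu_N-\nu|=O(N^{-\alpha_1})$. Then $$\limsup_{N\to\infty}\sum_{n=0}^{\infty} n^q g^{(N)}_n<\infty \quad\text{if and only if}\quad \limsup_{N\to\infty}\frac1N\sum_{i=1}^N\lambda_i^{q+1}<\infty.$$
   Context: For each $N$, $\{\lambda_i\}_{i=1}^N$ is a sequence of positive reals (the capacities of the nodes $1,\dots,N$ of a random graph on $N$ nodes). Define the probability mass function $$g^{(N)}_n=\frac{1}{N\mu_N}\sum_{i=1}^N e^{-\lambda_i}\frac{\lambda_i^{n+1}}{n!},\qquad n\geq 0,$$ where $\mu_N=\frac1N\sum_{i=1}^N\lambda_i$. *)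

(* Defs.v *)
From HB Require Import structures.
From mathcomp Require Import all_boot all_order all_algebra.
From mathcomp Require Import all_classical all_reals all_analysis.
Set Implicit Arguments. Unset Strict Implicit. Unset Printing Implicit Defensive.
Import Order.TTheory GRing.Theory Num.Theory.
Local Open Scope ring_scope.

(* Capacities: lam N i is lambda_{i+1} for the graph on N nodes, i : 'I_N
   (so nodes 1..N correspond to indices 0..N-1). *)

Section Defs.
Variable R : realType.

Definition muN (lam : nat -> nat -> R) (N : nat) : R :=
  (\sum_(i < N) lam N i) / N%:R.

Definition nuN (lam : nat -> nat -> R) (N : nat) : R :=
  (\sum_(i < N) lam N i ^+ 2) / (\sum_(i < N) lam N i).

Definition gN (lam : nat -> nat -> R) (N n : nat) : R :=
  (N%:R * muN lam N)^-1 *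
  \sum_(i < N) (expR (- lam N i) * lam N i ^+ n.+1 / (n`!)%:R).

(* sum_{n>=0} n^q g^(N)_n, as an extended real (terms are nonnegative) *)
Definition moment_g (lam : nat -> nat -> R) (q : R) (N : nat) : \bar R :=
  (\sum_(0 <= n <oo) ((n%:R `^ q) * gN lam N n)%:E)%E.

Definition moment_lam (lam : nat -> nat -> R) (q : R) (N : nat) : R :=
  (\sum_(i < N) (lam N i `^ (q + 1))) / N%:R.

Definition bigO_rate (x : nat -> R) (l a : R) : Prop :=
  exists C : R, exists N0 : nat, forall N : nat, (N0 <= N)%N ->
    `|x N - l| <= C * (N%:R `^ (- a)).

End Defs.

(* Main.v *)
Require Import Defs.
From HB Require Import structures.
From mathcomp Require Import all_boot all_order all_algebra.
From mathcomp Require Import all_classical all_reals all_analysis.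
From mathcomp Require Import ring lra.
Import Order.TTheory GRing.Theory Num.Theory.
Local Open Scope ring_scope.

Section H.
Variable R : realType.

Lemma expser (x : R) :
  (\sum_(0 <= n <oo) (exp_coeff x n)%:E = (expR x)%:E)%E.
Proof.
rewrite /expR -EFin_lim; last exact: is_cvg_series_exp_coeff.
apply: congr_lim; apply/funext => n /=.
by rewrite /series /= sumEFin.
Qed.

Definition pt (l : R) (n : nat) : R := expR (- l) * l ^+ n.+1 / (n`!)%:R.

Lemma ptE l n : pt l n = (expR (- l) * l) * exp_coeff l n.
Proof. by rewrite /pt /exp_coeff /= exprS !mulrA. Qed.

Lemma pt_ge0 l n : 0 <= l -> 0 <= pt l n.
Proof. by move=> l0; rewrite ptE mulr_ge0 ?exp_coeff_ge0 // mulr_ge0 // expR_ge0. Qed.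

Lemma sum_pt l : 0 <= l -> (\sum_(0 <= n <oo) (pt l n)%:E = l%:E)%E.
Proof.
move=> l0.
rewrite (eq_eseriesr (fun n _ => congr1 EFin (ptE l n))).
under eq_eseriesr do rewrite EFinM.
rewrite nneseriesZl; last by move=> n _; rewrite lee_fin exp_coeff_ge0.
rewrite expser -EFinM; congr EFin.
by rewrite mulrAC -expRD addNr expR0 mul1r.
Qed.

Lemma sum_npt l : 0 <= l ->
  (\sum_(0 <= n <oo) (n%:R * pt l n)%:E = (l ^+ 2)%:E)%E.
Proof.
move=> l0.
rewrite nneseries_recl //; last by move=> n _; rewrite lee_fin mulr_ge0 ?pt_ge0.
rewrite mul0r add0e -nneseries_addn; last by move=> n; rewrite lee_fin mulr_ge0 ?pt_ge0.
have E n : ((n + 1)%N%:R * pt l (n + 1)%N) = (expR (- l) * l ^+ 2) * exp_coeff l n.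
  rewrite /pt /exp_coeff /= addn1 factS natrM.
  have h1 : (n.+1)%:R != 0 :> R by rewrite pnatr_eq0.
  have h2 : (n`!)%:R != 0 :> R by rewrite pnatr_eq0 -lt0n fact_gt0.
  rewrite !exprS; field.
  rewrite h2 /=; apply/negP => /eqP H; have : (0:R) <= n%:R by []. lra.
rewrite (_ : (\sum_(0 <= n <oo) _ = \sum_(0 <= n <oo) ((expR (- l) * l ^+ 2)%:E * (exp_coeff l n)%:E))%E); last first.
  by apply: eq_eseriesr => n _ /=; rewrite E EFinM.
rewrite nneseriesZl; last by move=> n _; rewrite lee_fin exp_coeff_ge0.
rewrite expser -EFinM; congr EFin.
by rewrite mulrAC -expRD addNr expR0 mul1r.
Qed.

Lemma young_pt (q l x : R) : 1 <= q -> 0 < l -> 0 <= x ->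
  q * l `^ (q - 1) * x <= x `^ q + (q - 1) * l `^ q.
Proof.
move=> q1 l0 x0.
have [->|q1'] := eqVneq q 1.
  by rewrite subrr powRr0 powRr1 // mul0r addr0 !mul1r.
have qg1 : 1 < q by rewrite lt_neqAle eq_sym q1' q1.
have q0 : 0 < q by lra.
have qm0 : 0 < q - 1 by lra.
have p0 : 0 < q / (q - 1) by rewrite divr_gt0.
have hc : q^-1 + (q / (q - 1))^-1 = 1.
  rewrite invf_div; field; repeat (apply/andP; split); apply/negP => /eqP; lra.
have := @conjugate_powR R x (l `^ (q - 1)) q (q / (q - 1)) x0 (powR_ge0 _ _) q0 p0 hc.
rewrite -powRrM (_ : (q - 1) * (q / (q - 1)) = q); last first.
  field; repeat (apply/andP; split); apply/negP => /eqP; lra.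
rewrite invf_div => h.
have := ler_wpM2l (ltW q0) h.
rewrite mulrDr (mulrC x) mulrA => h2; apply: (le_trans h2).
rewrite le_eqVlt; apply/orP; left; apply/eqP.
field; repeat (apply/andP; split); apply/negP => /eqP; lra.
Qed.

Lemma powR_l_split (l a b : R) : 0 < l -> l `^ a * l `^ b = l `^ (a + b).
Proof. by move=> l0; rewrite powRD //; apply/implyP => _; rewrite gt_eqF. Qed.

Lemma lower (q l : R) : 1 <= q -> 0 < l ->
  ((l `^ (q + 1))%:E <= \sum_(0 <= n <oo) ((n%:R `^ q) * pt l n)%:E)%E.
Proof.
move=> q1 l0.
have ptg n : 0 <= pt l n by apply: pt_ge0; exact: ltW.
have key : ((q * l `^ (q - 1))%:E * \sum_(0 <= n <oo) (n%:R * pt l n)%:E <=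
   \sum_(0 <= n <oo) (((n%:R `^ q) * pt l n)%:E + ((q - 1) * l `^ q)%:E * (pt l n)%:E))%E.
  rewrite -nneseriesZl; last by move=> n _; rewrite lee_fin mulr_ge0.
  apply: lee_nneseries.
    move=> n _ _; rewrite -EFinM lee_fin mulr_ge0 // mulr_ge0 //; last exact: powR_ge0.
    lra.
  move=> n _; rewrite -!EFinM -EFinD lee_fin.
  rewrite mulrA -mulrDl ler_wpM2r //.
  apply: young_pt => //; exact: ler0n.
rewrite nneseriesD in key; last first.
  - by move=> n _ _; rewrite -EFinM lee_fin mulr_ge0 // mulr_ge0 //; [lra|exact: powR_ge0].
  - by move=> n _ _; rewrite lee_fin mulr_ge0 // powR_ge0.
rewrite nneseriesZl in key; last by move=> n _; rewrite lee_fin.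
rewrite sum_npt in key; last exact: ltW.
rewrite sum_pt in key; last exact: ltW.
rewrite -!EFinM in key.
have e1 : l `^ (q - 1) * l ^+ 2 = l `^ (q + 1).
  rewrite -powR_mulrn ?ltW // powR_l_split //; congr (_ `^ _); lra.
have e2 : l `^ q * l = l `^ (q + 1).
  by rewrite -{2}(powRr1 (ltW l0)) powR_l_split.
rewrite -mulrA e1 -mulrA e2 in key.
have fin : (((q - 1) * l `^ (q + 1))%:E \is a fin_num)%E by [].
rewrite -(leeBlDr _ _ fin) -EFinB in key.
apply: le_trans key; rewrite lee_fin le_eqVlt; apply/orP; left; apply/eqP; ring.
Qed.

Lemma ptw_upper (q l : R) (n : nat) : 1 <= q -> 0 < l ->
  n%:R `^ q <= (q * (l + 1)) `^ q * expR ((l + 1)^-1) ^+ n.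
Proof.
move=> q1 l0.
set s := (l + 1)^-1.
have s0 : 0 < s by rewrite invr_gt0; lra.
have q0 : 0 < q by lra.
set D := q * (l + 1).
have D0 : 0 < D by rewrite mulr_gt0 //; lra.
have -> : n%:R = D * (n%:R * s / q).
  rewrite /D /s; field; repeat (apply/andP; split); apply/negP => /eqP; lra.
have hy : 0 <= n%:R * s / q.
  by rewrite mulr_ge0 // ?invr_ge0 ?mulr_ge0 // ltW.
rewrite powRM ?(ltW D0) //.
rewrite ler_wpM2l ?powR_ge0 //.
rewrite -expRM_natl [X in expR X](_ : n%:R * s = (n%:R * s / q) * q); last first.
  field; apply/negP => /eqP; lra.
rewrite expRM.
apply: ge0_ler_powR; first exact: ltW.
- by rewrite nnegrE.
- by rewrite nnegrE expR_ge0.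
apply: le_trans (expR_ge1Dx _); lra.
Qed.

Lemma lc_le (l : R) : 0 < l -> l * expR ((l + 1)^-1) <= l + 1.
Proof.
move=> l0.
have h := expR_ge1Dx (- (l + 1)^-1).
have e : 1 + - (l + 1)^-1 = l / (l + 1).
  field; apply/negP => /eqP; lra.
rewrite e expRN in h.
have p1 : 0 < expR ((l + 1)^-1) := expR_gt0 _.
have p2 : 0 < l + 1 by lra.
rewrite ler_pdivrMr // in h.
have := ler_wpM2r (ltW p1) h.
rewrite mulrAC mulVf ?gt_eqF // mul1r => h2.
by [].
Qed.

Lemma upper (q l : R) : 1 <= q -> 0 < l ->
  (\sum_(0 <= n <oo) ((n%:R `^ q) * pt l n)%:E <=
    ((q * (l + 1)) `^ q * l * expR 1)%:E)%E.
Proof.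
move=> q1 l0.
set c := expR ((l + 1)^-1).
apply: (@le_trans _ _ (\sum_(0 <= n <oo)
   (((q * (l + 1)) `^ q * (expR (- l) * l))%:E * (exp_coeff (l * c) n)%:E))%E).
  apply: lee_nneseries.
    by move=> n _ _; rewrite lee_fin mulr_ge0 ?powR_ge0 ?pt_ge0 ?ltW.
  move=> n _; rewrite -EFinM lee_fin ptE.
  rewrite /exp_coeff /= exprMn.
  rewrite [X in _ <= X](_ : _ = ((q * (l + 1)) `^ q * c ^+ n) *
     (expR (- l) * l * (l ^+ n / n`!%:R))); last by ring.
  rewrite [X in X <= _]mulrC [X in _ <= X]mulrC.
  apply: ler_wpM2l.
    by rewrite -ptE pt_ge0 // ltW.
  by rewrite /c; apply: (@ptw_upper q l n q1 l0).
rewrite nneseriesZl; last first.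
  by move=> n _; rewrite lee_fin exp_coeff_ge0 // mulr_ge0 ?expR_ge0 ?ltW.
rewrite expser -EFinM lee_fin -!mulrA.
apply: ler_wpM2l; first exact: powR_ge0.
rewrite mulrC -mulrA; apply: ler_wpM2l; first exact: ltW.
rewrite mulrC -expRD ler_expR.
have := lc_le l l0.
rewrite -/c; lra.
Qed.

Definition Sm (q l : R) : \bar R :=
  (\sum_(0 <= n <oo) ((n%:R `^ q) * pt l n)%:E)%E.

Lemma pow_l1 (q l : R) : 0 <= q -> 0 < l -> (l + 1) `^ q <= 2 `^ q * (l `^ q + 1).
Proof.
move=> q0 l0.
have h2 : 0 <= 2 `^ q := powR_ge0 _ _.
have hl : 0 <= l `^ q := powR_ge0 _ _.
have [l1|l1] := leP l 1.
  apply: (@le_trans _ _ (2 `^ q)).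
    apply: ge0_ler_powR => //; rewrite ?nnegrE; lra.
  rewrite -{1}(mulr1 (2 `^ q)); apply: ler_wpM2l => //; lra.
apply: (@le_trans _ _ ((2 * l) `^ q)).
  apply: ge0_ler_powR => //; rewrite ?nnegrE; lra.
rewrite powRM; [|lra|lra]; apply: ler_wpM2l => //; lra.
Qed.

Definition Kq (q : R) := expR 1 * q `^ q * 2 `^ q.

Lemma upper2 (q l : R) : 1 <= q -> 0 < l ->
  (Sm q l <= (Kq q * (l `^ (q + 1) + l))%:E)%E.
Proof.
move=> q1 l0; apply: (le_trans (@upper q l q1 l0)); rewrite lee_fin.
have e2 : l `^ q * l = l `^ (q + 1).
  by rewrite -{2}(powRr1 (ltW l0)) powR_l_split.
rewrite /Kq -e2 (_ : l `^ q * l + l = (l `^ q + 1) * l); last by ring.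
rewrite powRM; [|lra|lra].
rewrite [X in X <= _](_ : _ = (expR 1 * q `^ q * l) * (l + 1) `^ q); last by ring.
rewrite [X in _ <= X](_ : _ = (expR 1 * q `^ q * l) * (2 `^ q * (l `^ q + 1))); last by ring.
apply: ler_wpM2l; last by apply: pow_l1 => //; lra.
by rewrite mulr_ge0 ?mulr_ge0 ?expR_ge0 ?powR_ge0 ?ltW.
Qed.

End H.

Arguments Sm {R}.
Arguments Kq {R}.
Arguments pt {R}.
Arguments lower {R}.
Arguments upper2 {R}.
Section M.
Variable R : realType.

Lemma moment_g_eq (lam : nat -> nat -> R) (q : R) (N : nat)
  (hlam : forall (N : nat) (i : 'I_N), 0 < lam N i) :
  moment_g lam q N = (((N%:R * muN lam N)^-1)%:E * \sum_(i < N) Sm q (lam N i))%E.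
Proof.
rewrite /moment_g /Sm.
have ge n (i : 'I_N) : 0 <= n%:R `^ q * pt (lam N i) n.
  by rewrite mulr_ge0 ?powR_ge0 ?pt_ge0 ?ltW.
transitivity (\sum_(0 <= n <oo) (((N%:R * muN lam N)^-1)%:E *
     \sum_(i < N) ((n%:R `^ q) * pt (lam N i) n)%:E))%E.
  apply: eq_eseriesr => n _.
  by rewrite /gN mulrCA mulr_sumr EFinM sumEFin.
rewrite nneseriesZl; last by move=> n _; apply: sume_ge0 => i _; rewrite lee_fin.
congr (_ * _)%E.
by rewrite nneseries_sum // => i j _; rewrite lee_fin.
Qed.

Definition AN (lam : nat -> nat -> R) (q : R) N := \sum_(i < N) lam N i `^ (q + 1).
Definition BN (lam : nat -> nat -> R) N := \sum_(i < N) lam N i.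

Lemma cN_eq (lam : nat -> nat -> R) N : (0 < N)%N ->
  (N%:R * muN lam N)^-1 = (BN lam N)^-1.
Proof.
move=> N0; rewrite /muN mulrCA divff ?mulr1 //.
by rewrite pnatr_eq0 -lt0n.
Qed.

Lemma BN_gt0 (lam : nat -> nat -> R) N
  (hlam : forall (N : nat) (i : 'I_N), 0 < lam N i) : (0 < N)%N -> 0 < BN lam N.
Proof.
move=> N0; rewrite /BN; case: N N0 => // N _.
rewrite big_ord_recl; apply: ltr_pwDl => //.
by apply: sumr_ge0 => i _; apply: ltW.
Qed.

Lemma AN_ge0 (lam : nat -> nat -> R) q N : 0 <= AN lam q N.
Proof. by apply: sumr_ge0 => i _; apply: powR_ge0. Qed.

Lemma boundsN (lam : nat -> nat -> R) (q : R) (N : nat)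
  (hlam : forall (N : nat) (i : 'I_N), 0 < lam N i) (q1 : 1 <= q) : (0 < N)%N ->
  ((AN lam q N / BN lam N)%:E <= moment_g lam q N)%E /\
  (moment_g lam q N <= (Kq q * (AN lam q N + BN lam N) / BN lam N)%:E)%E.
Proof.
move=> N0; rewrite moment_g_eq // cN_eq //.
have B0 := BN_gt0 lam N hlam N0.
have c0 : 0 <= (BN lam N)^-1 by rewrite invr_ge0 ltW.
have Sge (i : 'I_N) : ((lam N i `^ (q + 1))%:E <= Sm q (lam N i))%E by apply: lower.
split.
  rewrite mulrC EFinM; apply: lee_pmul => //; first by rewrite lee_fin AN_ge0.
  by rewrite /AN -sumEFin; apply: lee_sum => i _.
rewrite [X in (_ <= X)%E](_ : _ = ((BN lam N)^-1)%:E * (Kq q * (AN lam q N + BN lam N))%:E)%E;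
  last by rewrite -EFinM mulrC.
apply: lee_pmul => //.
  apply: sume_ge0 => i _; apply: le_trans (Sge i); rewrite lee_fin powR_ge0 //.
rewrite /AN /BN -big_split /= mulr_sumr -sumEFin; apply: lee_sum => i _.
by apply: upper2.
Qed.

Lemma mu_ev (lam : nat -> nat -> R) (mu alpha : R) : 0 < mu -> 0 < alpha ->
  bigO_rate (muN lam) mu alpha ->
  exists N1, forall N, (N1 <= N)%N -> (0 < N)%N /\ mu / 2 <= muN lam N <= 2 * mu.
Proof.
move=> mu0 a0 [C [N0 hC]].
have [N2 hN2] : exists N2, forall N, (N2 <= N)%N -> C * N%:R `^ (- alpha) <= mu / 2.
  have [C0|C0] := leP C 0.
    exists 0%N => N _; apply: (@le_trans _ _ 0); last lra.
    by rewrite mulr_le0_ge0 // powR_ge0.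
  set Y := 2 * C / mu.
  have Y0 : 0 <= Y by rewrite /Y; apply: divr_ge0; [apply: mulr_ge0; lra | lra].
  set X := Y `^ alpha^-1.
  have X0 : 0 <= X := powR_ge0 _ _.
  exists (Num.Def.archi_bound X) => N hN.
  have XN : X < N%:R.
    apply: lt_le_trans (archi_boundP X0) _; by rewrite ler_nat.
  have Npos : 0 < N%:R :> R by apply: le_lt_trans XN.
  have NA : Y <= N%:R `^ alpha.
    have -> : Y = X `^ alpha.
      by rewrite /X -powRrM mulVf ?gt_eqF // powRr1.
    apply: ge0_ler_powR; rewrite ?nnegrE //; [exact: ltW | exact: ltW].
  have NA0 : 0 < N%:R `^ alpha by apply: powR_gt0.
  rewrite powRN -/(C / _) ler_pdivrMr //.
  apply: le_trans (_ : mu / 2 * Y <= _).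
    rewrite /Y; rewrite le_eqVlt; apply/orP; left; apply/eqP; field.
    by apply/negP => /eqP; lra.
  by apply: ler_wpM2l => //; lra.
exists (maxn (maxn N0 N2) 1) => N hN.
have hN0 : (N0 <= N)%N by move: hN; rewrite !geq_max => /andP[/andP[]].
have hN2' : (N2 <= N)%N by move: hN; rewrite !geq_max => /andP[/andP[]].
have hN1 : (0 < N)%N by move: hN; rewrite !geq_max => /andP[_].
split => //.
have := le_trans (hC N hN0) (hN2 N hN2').
rewrite ler_norml => /andP[h1 h2].
apply/andP; split; lra.
Qed.

End M.

Arguments AN {R}. Arguments BN {R}. Arguments mu_ev {R}. Arguments boundsN {R}. Arguments BN_gt0 {R}. Arguments AN_ge0 {R}.
Local Open Scope ring_scope.

Lemma esup_fin (R : realType) (u : (\bar R)^nat) :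
  (limn_esup u < +oo)%E <-> exists M : R, exists m, forall n, (m <= n)%N -> (u n <= M%:E)%E.
Proof.
rewrite limn_esup_lim (cvg_lim _ (@cvg_esups_inf R u)) //; split.
  move=> /ereal_inf_lt [y [m _ <-]] hy.
  have ub n : (m <= n)%N -> (u n <= esups u m)%E.
    by move=> mn; apply: ereal_sup_ubound; exists n.
  move: hy; case E: (esups u m) => [r| |] // _.
    by exists r, m => n mn; rewrite -E; apply: ub.
  exists 0%R, m => n mn; have := ub n mn; rewrite E leeNy_eq => /eqP ->.
  by rewrite leNye.
move=> [M [m hm]].
apply: (@le_lt_trans _ _ (esups u m)).
  by apply: ereal_inf_lbound; exists m.
apply: (@le_lt_trans _ _ M%:E); last exact: ltry.
by apply: ge_ereal_sup => _ [n /= mn <-]; apply: hm.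
Qed.

Theorem lemmaA2 (R : realType) (lam : nat -> nat -> R) (q : R)
  (hlam : forall (N : nat) (i : 'I_N), 0 < lam N i)
  (hq : 1 <= q)
  (hmeans : exists (mu nu alpha1 : R), 0 < mu /\ 1 < nu /\ 0 < alpha1 /\
      bigO_rate (muN lam) mu alpha1 /\ bigO_rate (nuN lam) nu alpha1) :
  (limn_esup (moment_g lam q) < +oo)%E <->
  (limn_esup (fun N => (moment_lam lam q N)%:E) < +oo)%E.
Proof.
case: hmeans => mu [nu [al [mu0 [_ [a0 [hmu _]]]]]].
have [N1 hN1] := mu_ev lam mu al mu0 a0 hmu.
have K0 : 0 <= Kq q by rewrite /Kq mulr_ge0 ?mulr_ge0 ?expR_ge0 ?powR_ge0.
rewrite !esup_fin; split.
- move=> [M [m hm]]; exists (M * (2 * mu)), (maxn m N1) => N.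
  rewrite geq_max => /andP[hmN hN1N].
  have [N0 hmm] := hN1 N hN1N. move: hmm => /andP [mul muu].
  have [lo _] := boundsN lam q N hlam hq N0.
  have B0 := BN_gt0 lam N hlam N0.
  have Npos : 0 < N%:R :> R by rewrite ltr0n.
  have AB : AN lam q N / BN lam N <= M.
    by rewrite -lee_fin; apply: le_trans lo (hm N hmN).
  have AB0 : 0 <= AN lam q N / BN lam N by rewrite divr_ge0 ?AN_ge0 ?ltW.
  rewrite lee_fin /moment_lam -/(AN lam q N).
  rewrite (_ : AN lam q N / N%:R = (AN lam q N / BN lam N) * (BN lam N / N%:R)); last first.
    field; apply/andP; split; apply/negP => /eqP; lra.
  apply: ler_pM => //; first by rewrite divr_ge0 ?ltW.
- move=> [M [m hm]]; exists (Kq q * (M * (2 / mu) + 1)), (maxn m N1) => N.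
  rewrite geq_max => /andP[hmN hN1N].
  have [N0 hmm] := hN1 N hN1N. move: hmm => /andP [mul muu].
  have [_ up] := boundsN lam q N hlam hq N0.
  have B0 := BN_gt0 lam N hlam N0.
  have Npos : 0 < N%:R :> R by rewrite ltr0n.
  apply: le_trans up _; rewrite lee_fin.
  have hM : AN lam q N / N%:R <= M by rewrite -lee_fin; apply: hm.
  have hA0 : 0 <= AN lam q N / N%:R by rewrite divr_ge0 ?AN_ge0 ?ltW.
  have hB : mu / 2 <= BN lam N / N%:R by move: mul; rewrite /muN.
  rewrite (_ : Kq q * (AN lam q N + BN lam N) / BN lam N =
     Kq q * ((AN lam q N / N%:R) / (BN lam N / N%:R) + 1)); last first.
    field; repeat (apply/andP; split); apply/negP => /eqP; lra.
  apply: ler_wpM2l => //; rewrite lerD2r.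
  have r0 : 0 < BN lam N / N%:R by lra.
  rewrite ler_pdivrMr //.
  apply: (le_trans hM).
  have M0 : 0 <= M by lra.
  rewrite -mulrA -{1}(mulr1 M); apply: ler_wpM2l => //.
  rewrite -(ler_pdivrMl _ _ (_ : 0 < 2 / mu)); last by rewrite divr_gt0.
  by rewrite invf_div mulr1.
Qed.
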